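(* Let $K,G,m_0,A_g,B_g,\bar f_c,\bar f_t>0$, $e\in[0.5,1]$, $m_g'(p)=A_g e^{\frac{p-\bar f_t/3}{B_g\bar f_c}}$, and $\hat f(p,\varrho,\varrho_e)=\frac32\left(\frac{\varrho}{\bar f_c}\right)^2+m_0\left(\frac{\varrho_e}{\sqrt6\bar f_c}+\frac{p}{\bar f_c}\right)-1$. Let $\boldsymbol\sigma^{tr}\in\mathbb R^{3\times3}_{sym}$ with $p^{tr}=p(\boldsymbol\sigma^{tr})$, $\varrho^{tr}=\varrho(\boldsymbol\sigma^{tr})$, $r_e^{tr}=r_e(\cos\theta(\boldsymbol\sigma^{tr}))$, $\varrho_e^{tr}=\varrho_e(\boldsymbol\sigma^{tr})$. For $\gamma\ge0$ let $\hat p_{tr}(\gamma)$ be the unique real $p_\gamma$ with $p_\gamma+\gamma K m_g'(p_\gamma)/\bar f_c=p^{tr}$, let $\hat\varrho_{tr}(\gamma)$ be the unique real $\varrho_\gamma$ with $\varrho_\gamma=\big[\varrho^{tr}-\gamma2G\big(\frac{3\varrho_\gamma}{\bar f_c^2}+\frac{m_0}{\sqrt6\bar f_c}\big)\big]^+$, and $$q_{tr}(\gamma)=\frac32\Big(\frac{\hat\varrho_{tr}(\gamma)}{\bar f_c}\Big)^2+m_0\Big(\frac{\hat\varrho_{tr}(\gamma)r_e^{tr}}{\sqrt6\bar f_c}+\frac{\hat p_{tr}(\gamma)}{\bar f_c}\Big)-1.$$ Assume $\hat f(p^{tr},\varrho^{tr},\varrho_e^{tr})>0$. Then there exists a unique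 $\triangle\lambda>0$ with $q_{tr}(\triangle\lambda)=0$. Furthermore, each of the following problems has a unique solution: (R) find $(p,\varrho,\triangle\lambda)$ with $p=p^{tr}-\triangle\lambda K\frac{m_g'(p)}{\bar f_c}$, $\varrho=\big[\varrho^{tr}-\triangle\lambda2G\big(\frac{3\varrho}{\bar f_c^2}+\frac{m_0}{\sqrt6\bar f_c}\big)\big]^+$, $\hat f(p,\varrho,\varrho r_e^{tr})=0$; (P) find $(\boldsymbol\sigma,\triangle\lambda)$ with $\boldsymbol\sigma=\boldsymbol\sigma^{tr}-\triangle\lambda\big[K\frac{m_g'(p(\boldsymbol\sigma))}{\bar f_c}\mathbf I+2G\big(\frac{3\varrho(\boldsymbol\sigma)}{\bar f_c^2}+\frac{m_0}{\sqrt6\bar f_c}\big)\hat{\mathbf n}\big]$ for some $\hat{\mathbf n}\in\partial\varrho(\boldsymbol\sigma)$, $\triangle\lambda\ge0$, $\hat f(p(\boldsymbol\sigma),\varrho(\boldsymbol\sigma),\varrho_e(\boldsymbol\sigma))\le0$, $\triangle\lambda\hat f(p(\boldsymbol\sigma),\varrho(\boldsymbol\sigma),\varrho_e(\boldsymbol\sigma))=0$. In addition, if $q_{tr}\big(\sqrt6\bar f_c\varrho^{tr}/(2Gm_0)\big)<0$ then $\triangle\lambda\in\big(0,\sqrt6\bar f_c\varrho^{tr}/(2Gm_0)\big)$ and $\varrho>0$; conversely, if $q_{tr}\big(\sqrt6\bar f_c\varrho^{tr}/(2Gm_0)\big)\ge0$ then $\triangle\lambda\ge\sqrt6\bar f_c\varrho^{tr}/(2Gm_0)$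 and $\varrho=0$ (with $\varrho$ the corresponding component of the solution of (R)).
   Context: $\mathbb R^{3\times3}_{sym}$: real symmetric $3\times3$ matrices with Frobenius product '':'' and norm; $\mathbf I$ identity; $p(\boldsymbol\sigma)=\frac13\mathbf I:\boldsymbol\sigma$, $\mathbf s(\boldsymbol\sigma)=\boldsymbol\sigma-p(\boldsymbol\sigma)\mathbf I$, $\varrho(\boldsymbol\sigma)=\|\mathbf s(\boldsymbol\sigma)\|$; for $\varrho(\boldsymbol\sigma)>0$, $\theta(\boldsymbol\sigma)=\frac13\arccos\big(\frac{3\sqrt3}{2}J_3/J_2^{3/2}\big)$ with $J_2=\frac12\mathbf s:\mathbf s$, $J_3=\frac13\mathbf s^3:\mathbf I$. $r_e(\cos\theta)=\frac{4(1-e^2)\cos^2\theta+(2e-1)^2}{2(1-e^2)\cos\theta+(2e-1)\sqrt{4(1-e^2)\cos^2\theta+5e^2-4e}}$; $\varrho_e(\boldsymbol\sigma)=\varrho(\boldsymbol\sigma)r_e(\cos\theta(\boldsymbol\sigma))$ if $\varrho(\boldsymbol\sigma)>0$ and $0$ otherwise. When $\varrho^{tr}=0$, products of the form $(\cdot)\,r_e^{tr}$ with a vanishing factor are interpreted as $0$. $(x)^+=\max\{0,x\}$. $\partial\varrho(\boldsymbol\sigma)=\{\mathbf s(\boldsymbol\sigma)/\varrho(\boldsymbol\sigma)\}$ if $\varrho(\boldsymbol\sigma)>0$, and $\{\hat{\mathbf n}\in\mathbb R^{3\times3}_{sym}:\mathbf I:\hat{\mathbf n}=0,\|\hat{\mathbf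 n}\|\le1\}$ if $\varrho(\boldsymbol\sigma)=0$. *)

(* Defs.v *)
From HB Require Import structures.
From mathcomp Require Import all_boot all_order all_algebra.
From mathcomp Require Import all_classical all_reals all_analysis.
Set Implicit Arguments. Unset Strict Implicit. Unset Printing Implicit Defensive.
Import Order.TTheory GRing.Theory Num.Theory.
Local Open Scope ring_scope.
Local Open Scope classical_set_scope.

Section Defs.
Variable R : realType.
Implicit Types (s A B : 'M[R]_3) (x : R).

Definition symm3 A : Prop := A^T = A.
Definition frob A B : R := \sum_(i < 3) \sum_(j < 3) A i j * B i j.
Definition fnorm A : R := Num.sqrt (frob A A).
Definition Id3 : 'M[R]_3 := 1%:M.
Definition pmean s : R := 3^-1 * frob Id3 s.
Definition dev s : 'M[R]_3 := s - pmean s *: Id3.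
Definition rho s : R := fnorm (dev s).
Definition J2 s : R := 2^-1 * frob (dev s) (dev s).
Definition J3 s : R := 3^-1 * frob (dev s *m dev s *m dev s) Id3.
(* Lode angle (meaningful only when rho s > 0); J2^(3/2) = J2 * sqrt J2 *)
Definition theta s : R :=
  3^-1 * acos ((3 * Num.sqrt 3 / 2) * J3 s / (J2 s * Num.sqrt (J2 s))).
Definition r_e (e c : R) : R :=
  (4 * (1 - e ^+ 2) * c ^+ 2 + (2 * e - 1) ^+ 2) /
  (2 * (1 - e ^+ 2) * c +
   (2 * e - 1) * Num.sqrt (4 * (1 - e ^+ 2) * c ^+ 2 + 5 * e ^+ 2 - 4 * e)).
Definition rho_e (e : R) s : R :=
  if 0 < rho s then rho s * r_e e (cos (theta s)) else 0.
(* r_e^tr; set to 0 when rho^tr = 0 (products with a vanishing factor are 0) *)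
Definition r_e_tr (e : R) s : R :=
  if 0 < rho s then r_e e (cos (theta s)) else 0.
Definition subdiff_rho s : set 'M[R]_3 :=
  if 0 < rho s then [set (rho s)^-1 *: dev s]
  else [set n | symm3 n /\ frob Id3 n = 0 /\ fnorm n <= 1].

Definition pos_part x : R := Num.max 0 x.

Definition mgp (Ag Bg fc ft p : R) : R := Ag * expR ((p - ft / 3) / (Bg * fc)).
Definition fhat (m0 fc p r re : R) : R :=
  3 / 2 * (r / fc) ^+ 2 + m0 * (re / (Num.sqrt 6 * fc) + p / fc) - 1.

Definition phat_tr (K Ag Bg fc ft ptr gam : R) : R :=
  xget 0 [set p | p + gam * K * mgp Ag Bg fc ft p / fc = ptr].
Definition rhohat_tr (G m0 fc rtr gam : R) : R :=
  xget 0 [set r | r = pos_part (rtr - gam * (2 * G) *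
                     (3 * r / fc ^+ 2 + m0 / (Num.sqrt 6 * fc)))].
Definition q_tr (K G m0 Ag Bg fc ft e : R) (str : 'M[R]_3) (gam : R) : R :=
  let rh := rhohat_tr G m0 fc (rho str) gam in
  let ph := phat_tr K Ag Bg fc ft (pmean str) gam in
  3 / 2 * (rh / fc) ^+ 2
  + m0 * (rh * r_e_tr e str / (Num.sqrt 6 * fc) + ph / fc) - 1.

Definition prob_R (K G m0 Ag Bg fc ft e : R) (str : 'M[R]_3) (p r dl : R) : Prop :=
  [/\ 0 <= dl,
      p = pmean str - dl * K * mgp Ag Bg fc ft p / fc,
      r = pos_part (rho str - dl * (2 * G) *
                    (3 * r / fc ^+ 2 + m0 / (Num.sqrt 6 * fc)))
    & fhat m0 fc p r (r * r_e_tr e str) = 0].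

Definition prob_P (K G m0 Ag Bg fc ft e : R) (str s : 'M[R]_3) (dl : R) : Prop :=
  [/\ symm3 s,
      exists2 n, n \in subdiff_rho s &
        s = str - dl *: (K * mgp Ag Bg fc ft (pmean s) / fc *: Id3
              + (2 * G * (3 * rho s / fc ^+ 2 + m0 / (Num.sqrt 6 * fc))) *: n),
      0 <= dl,
      fhat m0 fc (pmean s) (rho s) (rho_e e s) <= 0
    & dl * fhat m0 fc (pmean s) (rho s) (rho_e e s) = 0].
End Defs.

(* Main.v *)
Require Import Defs.
From HB Require Import structures.
From mathcomp Require Import all_boot all_order all_algebra.
From mathcomp Require Import all_classical all_reals all_analysis.
From mathcomp Require Import ring lra.
Import Order.TTheory GRing.Theory Num.Theory.
Import numFieldNormedType.Exports.
Set Implicit Arguments. Unset Strict Implicit. Unset Printing Implicit Defensive.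
Local Open Scope ring_scope.

Lemma frobDl (R : realType) (A B C : 'M[R]_3) : frob (A + B) C = frob A C + frob B C.
Proof.
rewrite /frob -big_split; apply: eq_bigr => i _; rewrite -big_split.
by apply: eq_bigr => j _; rewrite !mxE mulrDl.
Qed.
Lemma frobZl (R : realType) (c : R) (A B : 'M[R]_3) : frob (c *: A) B = c * frob A B.
Proof.
rewrite /frob mulr_sumr; apply: eq_bigr => i _; rewrite mulr_sumr.
by apply: eq_bigr => j _; rewrite !mxE mulrA.
Qed.
Lemma frobC (R : realType) (A B : 'M[R]_3) : frob A B = frob B A.
Proof. by rewrite /frob; apply: eq_bigr => i _; apply: eq_bigr => j _; rewrite mulrC. Qed.
Lemma frobDr (R : realType) (A B C : 'M[R]_3) : frob C (A + B) = frob C A + frob C B.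
Proof. by rewrite frobC frobDl !(frobC C). Qed.
Lemma frobZr (R : realType) (c : R) (A B : 'M[R]_3) : frob B (c *: A) = c * frob B A.
Proof. by rewrite frobC frobZl frobC. Qed.
Lemma frobNr (R : realType) (A B : 'M[R]_3) : frob B (- A) = - frob B A.
Proof. by rewrite -scaleN1r frobZr mulN1r. Qed.
Lemma frobII (R : realType) : frob (Id3 R) (Id3 R) = 3.
Proof.
rewrite /frob /Id3 !big_ord_recr !big_ord0 /= !mxE /=. ring.
Qed.
Lemma pmeanI (R : realType) : pmean (Id3 R) = 1.
Proof. by rewrite /pmean frobII mulVf. Qed.
Lemma pmeanD (R : realType) (A B : 'M[R]_3) : pmean (A + B) = pmean A + pmean B.
Proof. by rewrite /pmean frobDr mulrDr. Qed.
Lemma pmeanZ (R : realType) (c : R) (A : 'M[R]_3) : pmean (c *: A) = c * pmean A.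
Proof. by rewrite /pmean frobZr mulrCA. Qed.
Lemma pmeanN (R : realType) (A : 'M[R]_3) : pmean (- A) = - pmean A.
Proof. by rewrite /pmean frobNr mulrN. Qed.
Lemma pmean_dev (R : realType) (A : 'M[R]_3) : pmean (dev A) = 0.
Proof. by rewrite /dev pmeanD pmeanN pmeanZ pmeanI mulr1 subrr. Qed.
Lemma frobI_dev (R : realType) (A : 'M[R]_3) : frob (Id3 R) (dev A) = 0.
Proof.
have := pmean_dev A; rewrite /pmean => /eqP; rewrite mulf_eq0 invr_eq0 => /orP[|/eqP//].
by rewrite pnatr_eq0.
Qed.
Lemma devD (R : realType) (A B : 'M[R]_3) : dev (A + B) = dev A + dev B.
Proof. rewrite /dev pmeanD scalerDl. by rewrite opprD addrACA. Qed.
Lemma devZ (R : realType) (c : R) (A : 'M[R]_3) : dev (c *: A) = c *: dev A.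
Proof. by rewrite /dev pmeanZ scalerBr scalerA. Qed.
Lemma devN (R : realType) (A : 'M[R]_3) : dev (- A) = - dev A.
Proof. by rewrite -scaleN1r devZ scaleN1r. Qed.
Lemma devI (R : realType) : dev (Id3 R) = 0.
Proof. by rewrite /dev pmeanI scale1r subrr. Qed.
Lemma dev_tr0 (R : realType) (A : 'M[R]_3) : frob (Id3 R) A = 0 -> dev A = A.
Proof. by move=> h; rewrite /dev /pmean h mulr0 scale0r subr0. Qed.
Lemma dev_dev (R : realType) (A : 'M[R]_3) : dev (dev A) = dev A.
Proof. exact/dev_tr0/frobI_dev. Qed.
Lemma decomp (R : realType) (A : 'M[R]_3) : A = pmean A *: Id3 R + dev A.
Proof. by rewrite /dev addrC subrK. Qed.
Lemma frob_ge0 (R : realType) (A : 'M[R]_3) : 0 <= frob A A.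
Proof.
by apply: sumr_ge0 => i _; apply: sumr_ge0 => j _; rewrite -expr2 sqr_ge0.
Qed.
Lemma mul_self_ge0 (R : realType) (x : R) : 0 <= x * x.
Proof. exact: (sqr_ge0 x). Qed.
Lemma frob_eq0 (R : realType) (A : 'M[R]_3) : frob A A = 0 -> A = 0.
Proof.
move=> h; apply/matrixP => i j; rewrite mxE.
have h1 := psumr_eq0P (fun i _ => sumr_ge0 _ (fun j _ => mul_self_ge0 (A i j))) h.
have h2 := psumr_eq0P (fun j _ => mul_self_ge0 (A i j)) (h1 i isT).
by have /eqP := h2 j isT; rewrite mulf_eq0 orbb => /eqP.
Qed.
Lemma fnorm_ge0 (R : realType) (A : 'M[R]_3) : 0 <= fnorm A.
Proof. exact: sqrtr_ge0. Qed.
Lemma fnorm_eq0 (R : realType) (A : 'M[R]_3) : fnorm A = 0 -> A = 0.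
Proof.
move=> /eqP; rewrite /fnorm sqrtr_eq0 => h; apply: frob_eq0.
by apply/eqP; rewrite eq_le h frob_ge0.
Qed.
Lemma fnormZ (R : realType) (c : R) (A : 'M[R]_3) : fnorm (c *: A) = `|c| * fnorm A.
Proof.
rewrite /fnorm frobZl frobZr mulrA sqrtrM ?mul_self_ge0 //.
by rewrite -expr2 sqrtr_sqr.
Qed.
Lemma theta_scale (R : realType) (s t : 'M[R]_3) (k : R) :
  0 < k -> dev s = k *: dev t -> theta s = theta t.
Proof.
move=> k0 h; rewrite /theta /J2 /J3 h.
rewrite !(frobZl, frobZr).
rewrite -?scalemxAl -?scalemxAr -?scalemxAl -?scalemxAr -?scalemxAl -?scalemxAr !scalerA !frobZl.
have -> : Num.sqrt (2^-1 * (k * (k * frob (dev t) (dev t)))) =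
          k * Num.sqrt (2^-1 * frob (dev t) (dev t)).
  rewrite (_ : 2^-1 * (k * (k * frob (dev t) (dev t))) = (k * k) * (2^-1 * frob (dev t) (dev t))); last by ring.
  by rewrite sqrtrM ?mul_self_ge0 // -expr2 sqrtr_sqr gtr0_norm.
congr (_ * acos _).
set a := frob _ _; set b := frob _ _; set c := Num.sqrt _.
have kn : k != 0 by rewrite gt_eqF.
rewrite -!mulrA; congr (_ * _).
rewrite !mulrA !invfM.
move: (Num.sqrt (2^-1 * b))^-1 => w; move: b^-1 => y.
by field.
Qed.
Lemma symm_dev (R : realType) (s : 'M[R]_3) : symm3 s -> symm3 (dev s).
Proof.
rewrite /symm3 => h; apply/matrixP => i j.
move/matrixP: h => /(_ i j); rewrite !mxE => h.
by rewrite h eq_sym.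
Qed.
Lemma symm_comb (R : realType) (s : 'M[R]_3) (a b : R) : symm3 s -> symm3 (a *: Id3 R + b *: s).
Proof.
rewrite /symm3 => h; apply/matrixP => i j.
move/matrixP: h => /(_ i j); rewrite !mxE => h.
by rewrite h eq_sym.
Qed.
Ltac pos0 := repeat (first [ done | apply: sqr_ge0 | apply: mulr_ge0 | apply: divr_ge0 | apply: addr_ge0 | apply: sqrtr_ge0 | rewrite invr_ge0 | apply: exprn_ge0 | apply: ltW ]).

Section Scal.
Variable R : realType.
Implicit Types (x y t r p : R).

Lemma pp0 x : x <= 0 -> pos_part x = 0.
Proof. by move=> h; rewrite /pos_part max_l. Qed.
Lemma ppid x : 0 <= x -> pos_part x = x.
Proof. by move=> h; rewrite /pos_part max_r. Qed.
Lemma pp_ge0 x : 0 <= pos_part x.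
Proof. by rewrite /pos_part le_max lexx. Qed.
Lemma pp_le x y : x <= y -> pos_part x <= pos_part y.
Proof.
move=> h; case: (leP x 0) => hx; first by rewrite pp0 // pp_ge0.
by rewrite !ppid // ?(ltW hx) // (le_trans (ltW hx) h).
Qed.

Lemma pos_sol t b r : 0 <= b ->
  (r = pos_part (t - b * r) <-> r = pos_part t / (1 + b)).
Proof.
move=> b0; have b1 : 1 + b != 0 by rewrite gt_eqF // ltr_wpDr.
split.
- move=> hr; have r0 : 0 <= r by rewrite hr pp_ge0.
  case: (leP (t - b * r) 0) => h.
  + have rz : r = 0 by rewrite hr pp0.
    by move: h; rewrite rz mulr0 subr0 => h; rewrite pp0 // mul0r.
  + rewrite ppid in hr; last exact: ltW.
    have tE : t = r * (1 + b) by rewrite mulrDr mulr1 {1}hr; ring.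
    rewrite ppid; last by rewrite tE mulr_ge0 // addr_ge0.
    by rewrite tE mulfK.
- move=> hr; case: (leP t 0) => h.
  + by rewrite pp0 // mul0r in hr; rewrite hr mulr0 subr0 pp0.
  + rewrite ppid in hr; last exact: ltW.
    have rE : r * (1 + b) = t by rewrite hr divfK.
    have -> : t - b * r = r by rewrite -rE; ring.
    by rewrite ppid // hr divr_ge0 // ?(ltW h) // addr_ge0.
Qed.

Definition rhf G m0 fc rtr gam : R :=
  pos_part (rtr - gam * (2 * G) * (m0 / (Num.sqrt 6 * fc))) /
  (1 + gam * (2 * G) * (3 / fc ^+ 2)).

Lemma rh_char G m0 fc rtr gam r : 0 <= G -> 0 <= gam ->
  (r = pos_part (rtr - gam * (2 * G) * (3 * r / fc ^+ 2 + m0 / (Num.sqrt 6 * fc))))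
  <-> r = rhf G m0 fc rtr gam.
Proof.
move=> G0 g0.
rewrite (_ : rtr - gam * (2 * G) * (3 * r / fc ^+ 2 + m0 / (Num.sqrt 6 * fc)) =
  (rtr - gam * (2 * G) * (m0 / (Num.sqrt 6 * fc))) - (gam * (2 * G) * (3 / fc ^+ 2)) * r);
  last by ring.
apply: pos_sol.
by pos0.
Qed.

Lemma rh_eq G m0 fc rtr gam : 0 <= G -> 0 <= gam ->
  rhohat_tr G m0 fc rtr gam = rhf G m0 fc rtr gam.
Proof.
move=> G0 g0; apply: xget_unique => [|y]; rewrite /=.
- by apply/(rh_char _ _ _ _ G0 g0).
- by move/(rh_char _ _ _ _ G0 g0).
Qed.

Lemma rhf_ge0 G m0 fc rtr gam : 0 <= G -> 0 <= gam -> 0 <= rhf G m0 fc rtr gam.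
Proof.
move=> G0 g0; rewrite /rhf divr_ge0 ?pp_ge0 // addr_ge0 //.
by pos0.
Qed.

Lemma rhf_mono G m0 fc rtr g1 g2 : 0 < G -> 0 < m0 -> 0 < fc -> 0 <= g1 -> g1 <= g2 ->
  rhf G m0 fc rtr g2 <= rhf G m0 fc rtr g1.
Proof.
move=> G0 m00 fc0 g10 g12; rewrite /rhf.
have s6 : 0 < Num.sqrt 6 :> R by rewrite sqrtr_gt0.
have a0 : 0 <= (2 * G) * (m0 / (Num.sqrt 6 * fc)) by pos0.
have b0 : 0 <= (2 * G) * (3 / fc ^+ 2) by pos0.
have d1 : 0 < 1 + g1 * (2 * G) * (3 / fc ^+ 2) by rewrite -mulrA ltr_wpDr //; pos0.
have d12 : 1 + g1 * (2 * G) * (3 / fc ^+ 2) <= 1 + g2 * (2 * G) * (3 / fc ^+ 2).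
  by rewrite lerD2l -!(mulrA g1) -!(mulrA g2) ler_wpM2r.
have n12 : pos_part (rtr - g2 * (2 * G) * (m0 / (Num.sqrt 6 * fc))) <=
           pos_part (rtr - g1 * (2 * G) * (m0 / (Num.sqrt 6 * fc))).
  by apply: pp_le; rewrite lerD2l lerN2 -!(mulrA g1) -!(mulrA g2) ler_wpM2r.
apply: (le_trans (y := pos_part (rtr - g1 * (2 * G) * (m0 / (Num.sqrt 6 * fc))) /
   (1 + g2 * (2 * G) * (3 / fc ^+ 2)))).
  by rewrite ler_wpM2r // invr_ge0 (le_trans (ltW d1)).
by rewrite ler_wpM2l ?pp_ge0 // lef_pV2 // ?posrE // (lt_le_trans d1).
Qed.

End Scal.

Section Ph.
Variable R : realType.
Variables (K Ag Bg fc ft ptr : R).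
Hypotheses (K0 : 0 < K) (Ag0 : 0 < Ag) (Bg0 : 0 < Bg) (fc0 : 0 < fc).
Local Notation m := (mgp Ag Bg fc ft).

Lemma mgp_gt0 p : 0 < m p.
Proof. by rewrite /mgp mulr_gt0 ?expR_gt0. Qed.
Lemma mgp_lt p1 p2 : p1 < p2 -> m p1 < m p2.
Proof.
move=> h; rewrite /mgp ltr_pM2l // ltr_expR ltr_pM2r ?invr_gt0 ?mulr_gt0 //.
by rewrite ltrD2r.
Qed.
Lemma mgp_le p1 p2 : p1 <= p2 -> m p1 <= m p2.
Proof. by rewrite le_eqVlt => /orP[/eqP->//|/mgp_lt/ltW]. Qed.

Lemma aux_lt (g1 g2 m1 m2 : R) : 0 <= g1 -> g1 < g2 -> 0 < m1 -> m1 <= m2 ->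
  g1 * K * m1 / fc < g2 * K * m2 / fc.
Proof.
move=> g10 g12 m10 m12; have k0 : 0 < K / fc by rewrite divr_gt0.
rewrite (_ : g1 * K * m1 / fc = g1 * m1 * (K / fc)); last by ring.
rewrite (_ : g2 * K * m2 / fc = g2 * m2 * (K / fc)); last by ring.
rewrite ltr_pM2r //.
apply: (le_lt_trans (y := g1 * m2)); first by rewrite ler_wpM2l.
by rewrite ltr_pM2r // (lt_le_trans m10).
Qed.
Lemma aux_le (g m1 m2 : R) : 0 <= g -> m1 <= m2 ->
  g * K * m1 / fc <= g * K * m2 / fc.
Proof.
move=> g0 m12; have k0 : 0 < K / fc by rewrite divr_gt0.
rewrite (_ : g * K * m1 / fc = g * m1 * (K / fc)); last by ring.
rewrite (_ : g * K * m2 / fc = g * m2 * (K / fc)); last by ring.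
by rewrite ler_pM2r // ler_wpM2l.
Qed.

Lemma ph_uniq gam p1 p2 : 0 <= gam ->
  p1 + gam * K * m p1 / fc = ptr -> p2 + gam * K * m p2 / fc = ptr -> p1 = p2.
Proof.
move=> g0 h1 h2; case: (ltgtP p1 p2) => // h.
- have := aux_le g0 (ltW (mgp_lt h)); lra.
- have := aux_le g0 (ltW (mgp_lt h)); lra.
Qed.

Lemma ph_ex gam : 0 <= gam -> exists p, p + gam * K * m p / fc = ptr.
Proof.
move=> g0.
pose f := fun p => p + gam * K * m p / fc.
pose a := ptr - gam * K * m ptr / fc.
have hab : a <= ptr by rewrite /a lerBlDr lerDl; pos0; apply: mgp_gt0.
have fa : f a <= ptr.
  have := aux_le g0 (mgp_le hab); rewrite /f /a; lra.
have fb : ptr <= f ptr.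
  rewrite /f lerDl; pos0; apply: mgp_gt0.
have [||c _ hc] := @IVT R f a ptr ptr hab; last by exists c.
- apply: continuous_subspaceT => x.
  apply: cvgD; first exact: cvg_id.
  apply: cvgMr_tmp; apply: cvgMl_tmp; apply: cvgMl_tmp.
  apply: continuous_comp; last exact: continuous_expR.
  apply: cvgMr_tmp; apply: cvgB; [exact: cvg_id| exact: cvg_cst].
- rewrite ge_min le_max fa fb orbT /=. done.
Qed.

Lemma ph_eq gam p : 0 <= gam -> p + gam * K * m p / fc = ptr ->
  phat_tr K Ag Bg fc ft ptr gam = p.
Proof.
move=> g0 h; apply: xget_unique => // y hy.
exact: (ph_uniq g0 hy h).
Qed.

Lemma ph_spec gam : 0 <= gam ->
  let p := phat_tr K Ag Bg fc ft ptr gam in p + gam * K * m p / fc = ptr.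
Proof.
move=> g0 /=; have [p hp] := ph_ex g0.
by rewrite (ph_eq g0 hp).
Qed.

Lemma ph_strict g1 g2 : 0 <= g1 -> g1 < g2 ->
  phat_tr K Ag Bg fc ft ptr g2 < phat_tr K Ag Bg fc ft ptr g1.
Proof.
move=> g10 g12; have g20 : 0 <= g2 by rewrite (le_trans g10) // ltW.
have h1 := ph_spec g10; have h2 := ph_spec g20; move: h1 h2 => /=.
set p1 := phat_tr _ _ _ _ _ _ g1; set p2 := phat_tr _ _ _ _ _ _ g2 => h1 h2.
rewrite ltNge; apply/negP => h.
have := aux_lt g10 g12 (mgp_gt0 p1) (mgp_le h); lra.
Qed.

Lemma ph0 : phat_tr K Ag Bg fc ft ptr 0 = ptr.
Proof. by apply: ph_eq => //; rewrite !mul0r addr0. Qed.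

End Ph.

Section Extra.
Variable R : realType.

Lemma fhat_le (m0 fc re p1 p2 r1 r2 : R) : 0 < m0 -> 0 < fc -> 0 <= re ->
  0 <= r1 -> r1 <= r2 -> p1 <= p2 ->
  fhat m0 fc p1 r1 (r1 * re) <= fhat m0 fc p2 r2 (r2 * re).
Proof.
move=> m00 fc0 re0 r10 r12 p12; rewrite /fhat.
have s6 : 0 < Num.sqrt 6 * fc :> R by rewrite mulr_gt0 ?sqrtr_gt0.
have a1 : r1 / fc <= r2 / fc by rewrite ler_wpM2r // invr_ge0 ltW.
have a0 : 0 <= r1 / fc by rewrite divr_ge0 // ltW.
have h1 : (r1 / fc) ^+ 2 <= (r2 / fc) ^+ 2 by rewrite !expr2 ler_pM.
have h2 : r1 * re / (Num.sqrt 6 * fc) <= r2 * re / (Num.sqrt 6 * fc).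
  by rewrite ler_wpM2r ?invr_ge0 ?(ltW s6) // ler_wpM2r.
have h3 : p1 / fc <= p2 / fc by rewrite ler_wpM2r // invr_ge0 ltW.
have h4 : m0 * (r1 * re / (Num.sqrt 6 * fc) + p1 / fc) <= m0 * (r2 * re / (Num.sqrt 6 * fc) + p2 / fc).
  by rewrite ler_wpM2l ?(ltW m00) // lerD.
have h5 : 3 / 2 * (r1 / fc) ^+ 2 <= 3 / 2 * (r2 / fc) ^+ 2 by rewrite ler_wpM2l.
lra.
Qed.

Lemma fhat_lt (m0 fc re p1 p2 r1 r2 : R) : 0 < m0 -> 0 < fc -> 0 <= re ->
  0 <= r1 -> r1 <= r2 -> p1 < p2 ->
  fhat m0 fc p1 r1 (r1 * re) < fhat m0 fc p2 r2 (r2 * re).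
Proof.
move=> m00 fc0 re0 r10 r12 p12.
apply: (le_lt_trans (fhat_le m00 fc0 re0 r10 r12 (lexx p1))).
by rewrite /fhat ltrD2r ltrD2l ltr_pM2l // ltrD2l ltr_pM2r // invr_gt0.
Qed.

Lemma matcomb (I D : 'M[R]_3) (a b c d e f : R) : a = c - d * e -> b = 1 - d * f ->
  a *: I + b *: D = (c *: I + D) - d *: (e *: I + f *: D).
Proof.
move=> -> ->; apply/matrixP => i j; rewrite !mxE; ring.
Qed.

Lemma symmZ (A : 'M[R]_3) (c : R) : symm3 A -> symm3 (c *: A).
Proof.
rewrite /symm3 => h; apply/matrixP => i j.
move/matrixP: h => /(_ i j); rewrite !mxE => h; by rewrite h.
Qed.

Lemma acos_range (x : R) : 0 <= acos x <= pi.
Proof.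
rewrite unlock; case: xgetP => [y -> [] //|_].
by rewrite /point /= lexx pi_ge0.
Qed.

Lemma r_e_ge0 (e c : R) : 2^-1 <= e <= 1 -> 0 <= c -> 0 <= r_e e c.
Proof.
move=> /andP[e1 e2] c0; rewrite /r_e.
have e0 : 0 <= 1 - e ^+ 2 by rewrite subr_ge0 expr_le1 // (le_trans _ e1).
have ee : 0 <= 2 * e - 1 by lra.
apply: divr_ge0.
  by rewrite addr_ge0 ?sqr_ge0 // !mulr_ge0 ?sqr_ge0.
by rewrite addr_ge0 // mulr_ge0 ?sqrtr_ge0 // !mulr_ge0.
Qed.

Lemma re_ge0 (e : R) (s : 'M[R]_3) : 2^-1 <= e <= 1 -> 0 <= r_e_tr e s.
Proof.
move=> he; rewrite /r_e_tr; case: ifP => // _.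
apply: r_e_ge0 => //; apply: cos_ge0_pihalf.
have := acos_range ((3 * Num.sqrt 3 / 2) * J3 s / (J2 s * Num.sqrt (J2 s))).
have := @pi_ge0 R.
rewrite /theta; set a := acos _ => hp /andP[h1 h2].
apply/andP; split; lra.
Qed.

End Extra.

Theorem theorem6 (R : realType) (K G m0 Ag Bg fc ft e : R) (str : 'M[R]_3) :
  0 < K -> 0 < G -> 0 < m0 -> 0 < Ag -> 0 < Bg -> 0 < fc -> 0 < ft ->
  2^-1 <= e <= 1 ->
  symm3 str ->
  0 < fhat m0 fc (pmean str) (rho str) (rho_e e str) ->
  let q := q_tr K G m0 Ag Bg fc ft e str in
  let D := Num.sqrt 6 * fc * rho str / (2 * G * m0) in
  exists dl : R,
    [/\ 0 < dl /\ q dl = 0,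
        (forall dl' : R, 0 < dl' -> q dl' = 0 -> dl' = dl),
        (exists x : R * R * R, prob_R K G m0 Ag Bg fc ft e str x.1.1 x.1.2 x.2 /\
           forall y : R * R * R,
             prob_R K G m0 Ag Bg fc ft e str y.1.1 y.1.2 y.2 -> y = x),
        (exists x : 'M[R]_3 * R, prob_P K G m0 Ag Bg fc ft e str x.1 x.2 /\
           forall y : 'M[R]_3 * R, prob_P K G m0 Ag Bg fc ft e str y.1 y.2 -> y = x)
      &
        ((q D < 0 -> (0 < dl < D) /\
           forall p r l : R, prob_R K G m0 Ag Bg fc ft e str p r l -> 0 < r) /\
          (0 <= q D -> D <= dl /\
           forall p r l : R, prob_R K G m0 Ag Bg fc ft e str p r l -> r = 0))].
Proof.
move=> K0 G0 m00 Ag0 Bg0 fc0 ft0 he sym hf q D.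
set ptr := pmean str; set rtr := rho str; set re := r_e_tr e str.
have rtr0 : 0 <= rtr by exact: fnorm_ge0.
have re0 : 0 <= re by exact: re_ge0.
have s60 : 0 < Num.sqrt 6 :> R by rewrite sqrtr_gt0.
pose A := 2 * G * (m0 / (Num.sqrt 6 * fc)).
have A0 : 0 < A by rewrite /A !mulr_gt0 ?invr_gt0 ?mulr_gt0.
pose ph g := phat_tr K Ag Bg fc ft ptr g.
pose rh g := rhf G m0 fc rtr g.
have qE : forall g, 0 <= g -> q g = fhat m0 fc (ph g) (rh g) (rh g * re).
  by move=> g g0; rewrite /q /q_tr rh_eq ?(ltW G0).
have rh0 : rh 0 = rtr by rewrite /rh /rhf !mul0r subr0 addr0 divr1 ppid.
have rhge0 : forall g, 0 <= g -> 0 <= rh g by move=> g g0; apply: rhf_ge0 => //; exact: ltW.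
have q0 : 0 < q 0.
  rewrite qE // /ph ph0 // rh0.
  suff <- : rho_e e str = rtr * re by [].
  by rewrite /rho_e /re /r_e_tr; case: ifP => //; rewrite mulr0.
have qdec : forall g1 g2, 0 <= g1 -> g1 < g2 -> q g2 < q g1.
  move=> g1 g2 g10 g12; have g20 : 0 <= g2 by rewrite (le_trans g10) // ltW.
  rewrite !qE //; apply: fhat_lt => //; first exact: rhge0.
    by apply: rhf_mono => //; exact: ltW.
  exact: ph_strict.
have qnonincr : forall g1 g2, 0 <= g1 -> g1 <= g2 -> q g2 <= q g1.
  move=> g1 g2 g10; rewrite le_eqVlt => /orP[/eqP->//|h].
  exact/ltW/qdec.
have [dl [dl0 qdl]] : exists dl, 0 < dl /\ q dl = 0.
  pose gm p := (ptr - p) * fc / (K * mgp Ag Bg fc ft p).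
  have mK : forall p, K * mgp Ag Bg fc ft p != 0.
    by move=> p; rewrite mulf_neq0 // gt_eqF // mgp_gt0.
  have gm0 : forall p, p <= ptr -> 0 <= gm p.
    move=> p hp; rewrite /gm; apply: divr_ge0.
      by apply: mulr_ge0; [rewrite subr_ge0 | exact: ltW].
    by apply: mulr_ge0; apply: ltW; [done | exact: mgp_gt0].
  have phgm : forall p, p <= ptr -> ph (gm p) = p.
    move=> p hp; apply: ph_eq => //; first exact: gm0.
    by rewrite /gm; field; rewrite !gt_eqF // mgp_gt0.
  pose rr p := rh (gm p).
  pose Qf p := 3 / 2 * (rr p / fc * (rr p / fc)) +
    m0 * (rr p * re / (Num.sqrt 6 * fc) + p / fc) - 1.
  have QE : forall p, p <= ptr -> Qf p = q (gm p).
    by move=> p hp; rewrite qE ?gm0 // phgm // /fhat /Qf /rr; ring.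
  pose H0 := 3 / 2 * (rtr / fc * (rtr / fc)) + m0 * (rtr * re / (Num.sqrt 6 * fc)).
  pose a := Num.min ptr ((1 - H0) * fc / m0 - 1).
  have aptr : a <= ptr by rewrite /a ge_min lexx.
  have Qa : Qf a < 0.
    have h1 : fhat m0 fc a (rr a) (rr a * re) <= fhat m0 fc a rtr (rtr * re).
      apply: fhat_le => //; first by apply: rhge0; exact: gm0.
      rewrite -[X in _ <= X]rh0; apply: rhf_mono => //; exact: gm0.
    have h2 : a <= (1 - H0) * fc / m0 - 1 by rewrite /a ge_min lexx orbT.
    have h3 : m0 * a / fc <= m0 * ((1 - H0) * fc / m0 - 1) / fc.
      by rewrite ler_wpM2r ?invr_ge0 ?(ltW fc0) // ler_wpM2l // ltW.
    have h4 : m0 * ((1 - H0) * fc / m0 - 1) / fc = 1 - H0 - m0 / fc.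
      by field; rewrite !gt_eqF.
    have h5 : 0 < m0 / fc by rewrite divr_gt0.
    have h6 : Qf a = fhat m0 fc a (rr a) (rr a * re) by rewrite /Qf /fhat; ring.
    have h7 : fhat m0 fc a rtr (rtr * re) = H0 + m0 * a / fc - 1.
      by rewrite /fhat /H0; ring.
    lra.
  have gmptr : gm ptr = 0 by rewrite /gm subrr !mul0r.
  have [||c cin Qc] := @IVT R Qf a ptr 0 aptr.
  - apply: continuous_in_subspaceT => x xin.
    have xp : x <= ptr by move: xin; rewrite inE /= in_itv /= => /andP[].
    have cm : {for x, continuous (mgp Ag Bg fc ft)}.
      rewrite /mgp; apply: cvgMl_tmp.
      apply: continuous_comp; last exact: continuous_expR.
      apply: cvgMr_tmp; apply: cvgB; [exact: cvg_id| exact: cvg_cst].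
    have cgm : {for x, continuous gm}.
      rewrite /gm; apply: cvgM.
        by apply: cvgMr_tmp; apply: cvgB; [exact: cvg_cst | exact: cvg_id].
      by apply: cvgV; [exact: mK | apply: cvgMl_tmp; exact: cm].
    have den : 1 + gm x * (2 * G) * (3 / fc ^+ 2) != 0.
      rewrite gt_eqF // ltr_wpDr //; apply: mulr_ge0; first apply: mulr_ge0.
      - exact: gm0.
      - by apply: mulr_ge0 => //; exact: ltW.
      - by apply: divr_ge0 => //; exact: sqr_ge0.
    have crr : {for x, continuous rr}.
      rewrite /rr /rh /rhf /pos_part; apply: cvgM.
        apply: (@continuous_max _ _ (fun=> 0)
          (fun y => rtr - gm y * (2 * G) * (m0 / (Num.sqrt 6 * fc)))); first exact: cvg_cst.
        apply: cvgB; first exact: cvg_cst.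
        by apply: cvgMr_tmp; apply: cvgMr_tmp; exact: cgm.
      apply: cvgV; first exact: den.
      apply: cvgD; first exact: cvg_cst.
      by apply: cvgMr_tmp; apply: cvgMr_tmp; exact: cgm.
    rewrite /Qf; apply: cvgB; last exact: cvg_cst.
    apply: cvgD.
      by apply: cvgMl_tmp; apply: cvgM; apply: cvgMr_tmp; exact: crr.
    apply: cvgMl_tmp; apply: cvgD.
      by apply: cvgMr_tmp; apply: cvgMr_tmp; exact: crr.
    by apply: cvgMr_tmp; exact: cvg_id.
  - by rewrite ge_min le_max (ltW Qa) /= (QE ptr) // gmptr (ltW q0) orbT.
  have cp : c <= ptr by move: cin; rewrite in_itv /= => /andP[].
  exists (gm c); split; last by rewrite -QE.
  rewrite lt_neqAle gm0 // andbT; apply/eqP => h.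
  have : q (gm c) = 0 by rewrite -QE.
  by rewrite -h => h'; move: q0; rewrite h' ltxx.
have rheq : forall g r, 0 <= g ->
   (r = pos_part (rtr - g * (2 * G) * (3 * r / fc ^+ 2 + m0 / (Num.sqrt 6 * fc)))
   <-> r = rh g).
  by move=> g r g0; apply: rh_char => //; exact: ltW.
have pheq : forall g p, 0 <= g -> p = ptr - g * K * mgp Ag Bg fc ft p / fc -> ph g = p.
  by move=> g p g0 h; apply: ph_eq => //; rewrite {1}h; ring.
have phspec : forall g, 0 <= g -> ph g = ptr - g * K * mgp Ag Bg fc ft (ph g) / fc.
  move=> g g0; have h : ph g + g * K * mgp Ag Bg fc ft (ph g) / fc = ptr.
    by apply: ph_spec.
  by rewrite -h; ring.
have uniq : forall l, 0 < l -> q l = 0 -> l = dl.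
  move=> l l0 ql; case: (ltgtP l dl) => // h.
  - by have := qdec l dl (ltW l0) h; rewrite ql qdl ltxx.
  - by have := qdec dl l (ltW dl0) h; rewrite ql qdl ltxx.
have qpos : forall l, 0 <= l -> q l <= 0 -> 0 < l.
  move=> l; rewrite le_eqVlt => /orP[/eqP <- |//].
  by rewrite leNgt q0.
have Runiq : forall p r l, prob_R K G m0 Ag Bg fc ft e str p r l ->
    [/\ p = ph dl, r = rh dl & l = dl].
  move=> p r l [l0 hp hr hf0].
  have php : ph l = p := pheq l p l0 hp.
  have rhr : r = rh l by apply/(rheq _ _ l0).
  have ql : q l = 0 by rewrite qE // php -rhr.
  have ll : l = dl by apply: uniq => //; apply: qpos => //; rewrite ql.
  by rewrite -ll -php -rhr.
have DE : D = rtr / A.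
  by rewrite /D -/rtr /A; field; rewrite !gt_eqF.
have D0 : 0 <= D by rewrite DE divr_ge0 // ltW.
have rhP : forall g, 0 <= g -> (0 < rh g) = (g < D).
  move=> g g0; rewrite /rh /rhf pmulr_lgt0; last first.
    rewrite invr_gt0 ltr_wpDr //; apply: mulr_ge0; first apply: mulr_ge0 => //.
    - by apply: mulr_ge0 => //; exact: ltW.
    - by apply: divr_ge0 => //; exact: sqr_ge0.
  rewrite /pos_part lt_max ltxx /= subr_gt0 DE ltr_pdivlMr //.
  by rewrite /A !mulrA.
exists dl; split.
- by split.
- exact: uniq.
- exists (ph dl, rh dl, dl); split.
    split => /=; first exact: ltW.
    + exact: phspec (ltW dl0).
    + by apply/(rheq _ _ (ltW dl0)).
    + by rewrite -qE // ltW.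
  by move=> [[p r] l] /Runiq /= [-> -> ->].
- pose k := rh dl / rtr.
  pose s0 := ph dl *: Id3 R + k *: dev str.
  have pm0 : pmean s0 = ph dl.
    by rewrite /s0 pmeanD !pmeanZ pmeanI pmean_dev mulr0 mulr1 addr0.
  have dv0 : dev s0 = k *: dev str.
    by rewrite /s0 devD !devZ devI dev_dev scaler0 add0r.
  have rtrpos : 0 < rh dl -> 0 < rtr.
    move=> h; move: (h); rewrite rhP ?(ltW dl0) // => hD.
    have : 0 < D by apply: lt_trans hD.
    by rewrite DE pmulr_lgt0 // invr_gt0.
  have rh0' : ~~ (0 < rh dl) -> rh dl = 0.
    by move=> h; apply: le_anti; rewrite leNgt h rhge0 // ltW.
  have rhos0 : rho s0 = rh dl.
    rewrite /rho dv0 fnormZ; change (fnorm (dev str)) with rtr.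
    case: (boolP (0 < rh dl)) => h.
      have r0 := rtrpos h.
      have k0 : 0 <= k by rewrite /k divr_ge0 // ?rhge0 // ltW.
      by rewrite ger0_norm // /k divfK // gt_eqF.
    by rewrite /k (rh0' h) mul0r normr0 mul0r.
  have rhoe0 : rho_e e s0 = rh dl * re.
    rewrite /rho_e rhos0 /re /r_e_tr; case: (boolP (0 < rh dl)) => h.
      have r0 := rtrpos h.
      rewrite (theta_scale (t := str) (k := k)) //; last by rewrite divr_gt0.
      by rewrite r0.
    by rewrite (rh0' h) mul0r.
  have fh0 : fhat m0 fc (pmean s0) (rho s0) (rho_e e s0) = 0.
    by rewrite pm0 rhos0 rhoe0 -qE // ltW.
  exists (s0, dl); split.
  + split => /=.
    * by apply: symm_comb; apply: symm_dev.
    * case: (boolP (0 < rh dl)) => h.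
      - have r0 := rtrpos h.
        have rhlin : rh dl = rtr - dl * (2 * G) * (3 * rh dl / fc ^+ 2 + m0 / (Num.sqrt 6 * fc)).
          have := (rheq dl (rh dl) (ltW dl0)).2 erefl.
          case: (leP (rtr - dl * (2 * G) * (3 * rh dl / fc ^+ 2 + m0 / (Num.sqrt 6 * fc))) 0) => hh.
            by rewrite pp0 // => h0; move: h; rewrite h0 ltxx.
          by rewrite ppid // ltW.
        exists (rtr^-1 *: dev str).
          rewrite in_setE /subdiff_rho rhos0 h /= dv0 scalerA /k.
          by congr (_ *: _); field; rewrite !gt_eqF.
        rewrite pm0 rhos0 scalerA [X in _ = X - _](decomp str) /s0.
        apply: matcomb.
          by rewrite {1}(phspec dl (ltW dl0)) -/ptr; ring.
        by rewrite /k {1}rhlin; field; rewrite !gt_eqF.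
      - have rz := rh0' h.
        have hle : rtr <= dl * A.
          by move: h; rewrite rhP ?(ltW dl0) // -leNgt DE ler_pdivrMr.
        exists ((dl * A)^-1 *: dev str).
          rewrite in_setE /subdiff_rho rhos0 (negbTE h) /=.
          split; first by apply: symmZ; exact: symm_dev.
          split; first by rewrite frobZr frobI_dev mulr0.
          rewrite fnormZ; change (fnorm (dev str)) with rtr.
          have c0 : 0 <= (dl * A)^-1 by rewrite invr_ge0; apply: mulr_ge0; apply: ltW.
          rewrite ger0_norm //.
          by rewrite mulrC ler_pdivrMr ?mul1r // mulr_gt0.
        rewrite pm0 rhos0 rz scalerA [X in _ = X - _](decomp str) /s0.
        apply: matcomb.
          by rewrite {1}(phspec dl (ltW dl0)) -/ptr; ring.
        by rewrite /k rz mul0r /A; field; rewrite !gt_eqF.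
    * exact: ltW.
    * by rewrite fh0.
    * by rewrite fh0 mulr0.
  + move=> [s l] /= [_ [n nin hs] l0 fle comp].
    have c1E : K * mgp Ag Bg fc ft (pmean s) / fc = K * mgp Ag Bg fc ft (pmean s) / fc by [].
    set c2 := 2 * G * (3 * rho s / fc ^+ 2 + m0 / (Num.sqrt 6 * fc)) in hs.
    have rs0 : 0 <= rho s by exact: fnorm_ge0.
    have c20 : 0 <= c2.
      rewrite /c2; apply: mulr_ge0; first by apply: mulr_ge0 => //; exact: ltW.
      apply: addr_ge0; first by apply: divr_ge0; [apply: mulr_ge0 | exact: sqr_ge0].
      by apply: divr_ge0; [exact: ltW | apply: mulr_ge0; exact: ltW].
    move: nin; rewrite in_setE /subdiff_rho => nin.
    have trn : frob (Id3 R) n = 0.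
      move: nin; case: ifP => _; last by case=> _ [].
      by move=> ->; rewrite frobZr frobI_dev mulr0.
    have pmn : pmean n = 0 by rewrite /pmean trn mulr0.
    have pms : pmean s = ptr - l * (K * mgp Ag Bg fc ft (pmean s) / fc).
      have := congr1 (@pmean R) hs; rewrite pmeanD pmeanN pmeanZ pmeanD !pmeanZ pmeanI pmn.
      by move=> h; rewrite {1}h -/ptr; ring.
    have php : ph l = pmean s.
      by apply: pheq => //; rewrite {1}pms; ring.
    have dvs : dev s = dev str - (l * c2) *: n.
      have := congr1 (@dev R) hs; rewrite devD devN devZ devD !devZ devI (dev_tr0 trn).
      by rewrite scaler0 add0r scalerA.
    have [rs_eq dvs' rhoes] : [/\ rho s = rh l, dev s = (rho s / rtr) *: dev str
                              & rho_e e s = rho s * re].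
      case: (boolP (0 < rho s)) => rs.
      - rewrite rs in nin; rewrite nin scalerA in dvs.
        have e1 : dev str = (1 + l * c2 / rho s) *: dev s.
          apply/matrixP => i j; move/matrixP: dvs => /(_ i j); rewrite !mxE => dvs.
          lra.
        have t0 : 0 <= 1 + l * c2 / rho s.
          by apply: addr_ge0 => //; apply: divr_ge0 => //; apply: mulr_ge0.
        have rtrE : rtr = rho s + l * c2.
          have := congr1 (@fnorm R) e1; rewrite fnormZ ger0_norm //.
          change (fnorm (dev str)) with rtr; change (fnorm (dev s)) with (rho s) => ->.
          by field; rewrite gt_eqF.
        have rtrp : 0 < rtr by rewrite rtrE ltr_wpDr // mulr_ge0.
        have rlin : rho s = rh l.
          apply/(rheq _ _ l0).
          have -> : rtr - l * (2 * G) * (3 * rho s / fc ^+ 2 + m0 / (Num.sqrt 6 * fc)) = rho s.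
            by rewrite rtrE /c2; ring.
          by rewrite ppid // ltW.
        have dvs' : dev s = (rho s / rtr) *: dev str.
          rewrite e1 scalerA rtrE (_ : _ * _ = 1) ?scale1r //.
          by field; rewrite !gt_eqF // -rtrE.
        split => //.
        rewrite /rho_e rs /re /r_e_tr.
        rewrite (theta_scale (t := str) (k := rho s / rtr)) //; last by rewrite divr_gt0.
        by rewrite rtrp.
      - have r0 : rho s = 0 by apply/eqP; rewrite eq_le leNgt rs rs0.
        rewrite (negbTE rs) in nin; case: nin => [_ [_ nle]].
        have ds0 : dev s = 0 by apply: fnorm_eq0.
        have e1 : dev str = (l * c2) *: n.
          by move: dvs; rewrite ds0 => /eqP; rewrite eq_sym subr_eq0 => /eqP.
        have c2E : c2 = A by rewrite /c2 r0 /A; ring.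
        have hle : rtr <= l * A.
          have := congr1 (@fnorm R) e1; change (fnorm (dev str)) with rtr => ->.
          rewrite fnormZ c2E ger0_norm; last by apply: mulr_ge0 => //; exact: ltW.
          rewrite -[X in _ <= X]mulr1 ler_wpM2l //; apply: mulr_ge0 => //; exact: ltW.
        have rlin : rho s = rh l.
          apply/(rheq _ _ l0); rewrite r0 pp0 //.
          rewrite subr_le0 (le_trans hle) // le_eqVlt; apply/orP; left; apply/eqP.
          by rewrite /A; ring.
        split => //; first by rewrite ds0 r0 mul0r scale0r.
        by rewrite /rho_e (negbTE rs) r0 mul0r.
    have qs : q l = fhat m0 fc (pmean s) (rho s) (rho_e e s).
      by rewrite qE // php rhoes rs_eq.
    have lpos : 0 < l by apply: qpos => //; rewrite qs.
    have fz : fhat m0 fc (pmean s) (rho s) (rho_e e s) = 0.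
      by move/eqP: comp; rewrite mulf_eq0 (gt_eqF lpos) /= => /eqP.
    have ll : l = dl by apply: uniq => //; rewrite qs.
    have -> : s = s0 by rewrite [LHS]decomp dvs' rs_eq -php ll.
    by rewrite ll.
- split.
  + move=> qD; have lt : dl < D.
      rewrite ltNge; apply/negP => h; have := qnonincr D dl D0 h; lra.
    split; first by rewrite dl0 lt.
    by move=> p r l /Runiq [_ -> _]; rewrite rhP // ltW.
  + move=> qD; have le : D <= dl.
      rewrite leNgt; apply/negP => h; have := qdec dl D (ltW dl0) h; lra.
    split => //.
    move=> p r l /Runiq [_ -> _]; apply: le_anti.
    by rewrite (rhge0 _ (ltW dl0)) andbT leNgt rhP ?(ltW dl0) // -leNgt.
Qed.
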